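(* Let $M$ be a finite $\mathscr R$-trivial monoid, $k$ a field and $X\in\Lambda(M)$. Let $S_X$ be the simple $kM$-module associated to $X$ and $P_X$ its projective cover. Then $P_X\cong kML_X/k\widetilde L(X)_<$. More precisely, $P_X$ is isomorphic to the $kM$-module $k\widetilde L_X$ with basis $\widetilde L_X$ and action given on basis elements by $m\cdot n=mn$ if $mn\in\widetilde L_X$ and $m\cdot n=0$ otherwise ($m\in M$, $n\in\widetilde L_X$).
   Context: $M$ is $\mathscr R$-trivial if $mM=nM$ implies $m=n$. $\Lambda(M)$ is the set of ideals $MeM$ with $e$ idempotent; $\sigma(m)=Mm^\omega M$ ($m^\omega$ the idempotent power). $S_X$ is the one-dimensional module on which $m$ acts by $1$ if $X\subseteq \sigma(m)$ and $0$ otherwise. Fix an idempotent $e_X$ with $Me_XM=X$; $L_X=\{n\in M: Mn=Me_X\}$. Define $m\le_{\widetilde{\mathscr L}}n$ if for every idempotent $e$, $ne=n$ implies $me=m$; $m\mathrel{\widetilde{\mathscr L}}n$ if both $m\le n$ and $n\le m$. $\widetilde L_X$ is the $\widetilde{\mathscr L}$-class of $e_X$, $ML_X=\{mn: m\in M,n\in L_X\}$, $\widetilde L(X)_<=ML_X\setminus\widetilde L_X$ (both left ideals), and $kML_X/k\widetilde L(X)_<$ is the quotient of the spans. *)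

(* Defs.v *)
From HB Require Import structures.
From mathcomp Require Import all_boot all_order all_algebra.
Set Implicit Arguments. Unset Strict Implicit. Unset Printing Implicit Defensive.
Import GRing.Theory.
Local Open Scope ring_scope.

Record finMonoid := FinMonoid {
  mcar :> finType;
  mmul : mcar -> mcar -> mcar;
  mone : mcar;
  mmulA : associative mmul;
  mmul1 : left_id mone mmul;
  mmulm1 : right_id mone mmul }.

Section MonoidDefs.
Variable M : finMonoid.
Local Notation "x ** y" := (mmul x y) (at level 40, left associativity).

Definition idempotent_el (e : M) : bool := e ** e == e.

Fixpoint mpow (m : M) (k : nat) : M :=
  if k is k'.+1 then m ** mpow m k' else mone M.

Definition momega (m : M) : M :=
  odflt m [pick e | idempotent_el e &&
     [exists k : 'I_(#|M|.+1), (0 < (k : nat))%N && (e == mpow m k)]].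

Definition right_ideal_of (m : M) : {set M} := [set m ** a | a : M].
Definition left_ideal_of (m : M) : {set M} := [set a ** m | a : M].
Definition R_trivial : Prop :=
  forall m n : M, right_ideal_of m = right_ideal_of n -> m = n.

Definition two_sided_ideal (m : M) : {set M} := [set a ** m ** b | a : M, b : M].

Definition Lambda (X : {set M}) : Prop :=
  exists e : M, idempotent_el e /\ two_sided_ideal e = X.

Definition sigma (m : M) : {set M} := two_sided_ideal (momega m).

(* L_X, for a fixed idempotent eX with M eX M = X *)
Definition L_of (eX : M) : {set M} := [set n | left_ideal_of n == left_ideal_of eX].

Definition leLt (m n : M) : bool :=
  [forall e : M, idempotent_el e ==> ((n ** e == n) ==> (m ** e == m))].
Definition eqLt (m n : M) : bool := leLt m n && leLt n m.

Definition Lt_of (eX : M) : {set M} := [set n | eqLt n eX].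
Definition ML_of (eX : M) : {set M} := [set a ** n | a : M, n : M in L_of eX].
Definition Llt_of (eX : M) : {set M} := ML_of eX :\: Lt_of eX.

End MonoidDefs.

Notation LtT eX := {n : _ | n \in Lt_of eX}.
Notation kLt k eX := {ffun LtT eX -> k^o}.
Notation MLT eX := {n : _ | n \in ML_of eX}.
Notation kML k eX := {ffun MLT eX -> k^o}.

Section ModuleDefs.
Variables (k : fieldType) (M : finMonoid).

Definition lin_map (V W : lmodType k) (f : V -> W) : Prop :=
  forall (a : k) (u v : V), f (a *: u + v) = a *: f u + f v.

Definition is_kM_module (V : lmodType k) (act : M -> V -> V) : Prop :=
  [/\ forall m, lin_map (act m),
      forall v, act (mone M) v = v &
      forall m n v, act (mmul m n) v = act m (act n v)].

Definition is_kM_hom (V W : lmodType k) (actV : M -> V -> V) (actW : M -> W -> W)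
  (f : V -> W) : Prop :=
  lin_map f /\ forall m v, f (actV m v) = actW m (f v).

Definition is_projective (P : lmodType k) (actP : M -> P -> P) : Prop :=
  is_kM_module actP /\
  forall (A B : lmodType k) (actA : M -> A -> A) (actB : M -> B -> B) (g : A -> B),
    is_kM_module actA -> is_kM_module actB -> is_kM_hom actA actB g ->
    (forall b, exists a, g a = b) ->
    forall h : P -> B, is_kM_hom actP actB h ->
    exists h' : P -> A, is_kM_hom actP actA h' /\ forall v, g (h' v) = h v.

Definition is_submodule (P : lmodType k) (actP : M -> P -> P) (N : P -> Prop) : Prop :=
  [/\ N 0, forall u v, N u -> N v -> N (u + v),
      forall (a : k) v, N v -> N (a *: v) &
      forall m v, N v -> N (actP m v)].

(* (P, pi) is a projective cover of S: P projective, pi : P ->> S an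
   epimorphism whose kernel is superfluous. *)
Definition is_projective_cover (S : lmodType k) (actS : M -> S -> S)
  (P : lmodType k) (actP : M -> P -> P) (pi : P -> S) : Prop :=
  [/\ is_projective actP, is_kM_hom actP actS pi,
      (forall s, exists v, pi v = s) &
      forall N : P -> Prop, is_submodule actP N ->
        (forall v, exists a b, [/\ N a, pi b = 0 & v = a + b]) ->
        forall v, N v].

Definition kM_isomorphic (V W : lmodType k) (actV : M -> V -> V) (actW : M -> W -> W)
  : Prop :=
  exists f : V -> W, is_kM_hom actV actW f /\ bijective f.

Definition S_act (X : {set M}) (m : M) (x : k^o) : k^o :=
  if X \subset sigma m then x else 0.

Definition basisLt (eX : M) (n : LtT eX) : kLt k eX := [ffun x => (x == n)%:R].
Definition Lt_img (eX : M) (m : M) (n : LtT eX) : kLt k eX :=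
  if (insub (mmul m (val n)) : option (LtT eX)) is Some n'
  then basisLt n' else 0.
Definition Lt_act (eX : M) (m : M) (f : kLt k eX) : kLt k eX :=
  \sum_(n : LtT eX) f n *: Lt_img m n.

Definition basisML (eX : M) (n : MLT eX) : kML k eX := [ffun x => (x == n)%:R].
Definition ML_img (eX : M) (m : M) (n : MLT eX) : kML k eX :=
  if (insub (mmul m (val n)) : option (MLT eX)) is Some n'
  then basisML n' else 0.
Definition ML_act (eX : M) (m : M) (f : kML k eX) : kML k eX :=
  \sum_(n : MLT eX) f n *: ML_img m n.

Definition in_kLlt (eX : M) (f : kML k eX) : Prop :=
  forall n : MLT eX, val n \notin Llt_of eX -> f n = 0.

End ModuleDefs.

(* Main.v *)
Require Import Defs.
From mathcomp Require Import all_boot all_order all_algebra zify.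
Set Implicit Arguments. Unset Strict Implicit. Unset Printing Implicit Defensive.
Import GRing.Theory.
Local Open Scope ring_scope.


Section Mon.
Variable M : finMonoid.
Local Notation "x ** y" := (mmul x y) (at level 40, left associativity).
Local Notation "1m" := (mone M).
Hypothesis RT : R_trivial M.

Lemma mA (x y z : M) : x ** (y ** z) = x ** y ** z.
Proof. by rewrite mmulA. Qed.
Lemma m1 (x : M) : 1m ** x = x. Proof. exact: mmul1. Qed.
Lemma mr1 (x : M) : x ** 1m = x. Proof. exact: mmulm1. Qed.

Lemma in_rid (x y : M) : x ** y \in right_ideal_of x.
Proof. by apply/imsetP; exists y. Qed.

Lemma rid_mul (x y : M) : right_ideal_of (x ** y) \subset right_ideal_of x.
Proof.
apply/subsetP=> z /imsetP[a _ ->]; rewrite -mA; exact: in_rid.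
Qed.

Lemma rid_lt (x y : M) : x ** y != x ->
  (#|right_ideal_of (x ** y)| < #|right_ideal_of x|)%N.
Proof.
move=> ne; rewrite ltnNge; apply/negP=> le; move/eqP: ne; apply.
apply: RT; apply/eqP; rewrite eqEcard rid_mul le //.
Qed.

Lemma rid_le (x y : M) : (#|right_ideal_of (x ** y)| <= #|right_ideal_of x|)%N.
Proof. exact: subset_leq_card (rid_mul x y). Qed.

Lemma rid_gt0 (x : M) : (0 < #|right_ideal_of x|)%N.
Proof. by apply/card_gt0P; exists x; rewrite -{1}(mr1 x) in_rid. Qed.

Lemma efac (e x y : M) : e ** e = e -> e = x ** y -> e ** x = e.
Proof.
move=> ee exy; apply: RT; apply/eqP; rewrite eqEsubset rid_mul /=.
apply/subsetP=> z /imsetP[a _ ->].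
have -> : e ** a = e ** x ** (y ** a) by rewrite -mA (mA x) -exy mA ee.
exact: in_rid.
Qed.

Lemma mpowSr (m : M) k : mpow m k.+1 = mpow m k ** m.
Proof.
elim: k => [|k IH] /=; first by rewrite m1 mr1.
by rewrite -mA -IH.
Qed.

Lemma mpowD (m : M) a b : mpow m (a + b) = mpow m a ** mpow m b.
Proof. elim: a => [|a IH] /=; first by rewrite m1. by rewrite IH mA. Qed.

Lemma idem_pow_ex (m : M) : exists2 k, (0 < k <= #|M|)%N &
  mpow m k ** mpow m k = mpow m k.
Proof.
pose c k := #|right_ideal_of (mpow m k)|.
have cS k : (c k.+1 <= c k)%N by rewrite /c mpowSr rid_le.
have c_pos k : (0 < c k)%N by apply: rid_gt0.
have c_le k : (c k <= #|M|)%N by apply: max_card.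
have [k Hk Hc] : exists2 k, (0 < k <= #|M|)%N & (c k.+1 >= c k)%N.
  case: (boolP [exists k : 'I_#|M|, (c k.+1 <= c k.+2)%N]).
    by case/existsP=> k Hk; exists k.+1 => //; rewrite ltn_ord.
  rewrite negb_exists => /forallP Hall.
  have H j : (j <= #|M|)%N -> (c j.+1 + j <= c 1)%N.
    elim: j => [|j IH] Hj; first by rewrite addn0.
    have := Hall (Ordinal Hj); rewrite /= -ltnNge => lt.
    rewrite addnS; apply: leq_trans (IH (ltnW Hj)); rewrite -addSn leq_add2r; exact: lt.
  have := H _ (leqnn #|M|) => /leq_trans /(_ (c_le 1%N)).
  by move=> h; have := c_pos #|M|.+1; lia.
exists k => //.
have e1 : mpow m k ** m = mpow m k.
  apply: RT; apply/eqP; rewrite eqEcard rid_mul /=.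
  by rewrite /c mpowSr in Hc.
have e2 j : mpow m k ** mpow m j = mpow m k.
  elim: j => [|j IH]; first by rewrite /= mr1.
  by rewrite mpowSr mA IH e1.
exact: e2.
Qed.

Lemma momegaP (m : M) : momega m ** momega m = momega m /\
  exists2 k, (0 < k)%N & momega m = mpow m k.
Proof.
rewrite /momega; case: pickP => [e /andP[/eqP ide /existsP[k /andP[kp /eqP ek]]]|none] /=.
  by subst e; split=> //; exists (nat_of_ord k).
exfalso; have [k /andP[kp kle] ide] := idem_pow_ex m.
have kl : (k < #|M|.+1)%N by [].
have := none (mpow m k); rewrite /idempotent_el ide eqxx /=.
by move/negbT/existsPn/(_ (Ordinal kl)); rewrite /= kp eqxx.
Qed.

Lemma momega_m (m : M) : momega m ** m = momega m.
Proof.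
have [ide [k kp ek]] := momegaP m.
rewrite ek in ide *; apply: (efac (y := mpow m k.-1) ide).
by case: k kp {ek ide} => //= k _.
Qed.

Lemma momega_pow (m : M) (x : M) : x ** m = x -> x ** momega m = x.
Proof.
move=> xm; have [_ [k _ ->]] := momegaP m.
elim: k => [|k IH] /=; first by rewrite mr1.
by rewrite mA xm.
Qed.

Lemma momega_in (m : M) : momega m \in right_ideal_of m.
Proof.
have [_ [k kp ->]] := momegaP m; case: k kp => //= k _; exact: in_rid.
Qed.

Section EX.
Variable eX : M.
Hypothesis eXi : eX ** eX = eX.
Local Notation Lt := (Lt_of eX).

Lemma leLtE (x y : M) : leLt x y -> forall e, e ** e = e -> y ** e = y -> x ** e = x.
Proof.
rewrite /leLt; move/forallP=> H e ee ye; have := H e; rewrite /idempotent_el ee ye eqxx /=.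
by rewrite eqxx => /eqP.
Qed.

Lemma leLtI (x y : M) : (forall e, e ** e = e -> y ** e = y -> x ** e = x) -> leLt x y.
Proof.
move=> H; rewrite /leLt; apply/forallP=> e; apply/implyP=> /eqP ee; apply/implyP=> /eqP ye.
by rewrite H.
Qed.

Lemma leLt_trans (x y z : M) : leLt x y -> leLt y z -> leLt x z.
Proof.
move=> H1 H2; apply: leLtI => e ee ze.
by apply: (leLtE H1) => //; apply: (leLtE H2).
Qed.

Lemma leLt_mull (m x : M) : leLt (m ** x) x.
Proof. by apply: leLtI => e ee xe; rewrite -mA xe. Qed.

Lemma inLt (x : M) : (x \in Lt) = leLt x eX && leLt eX x.
Proof. by rewrite inE. Qed.

Lemma Lt_eX (x : M) : x \in Lt -> x ** eX = x.
Proof. by rewrite inLt => /andP[H _]; apply: (leLtE H). Qed.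

Lemma eX_Lt : eX \in Lt.
Proof. by rewrite inLt; apply/andP; split; apply: leLtI. Qed.

Lemma Lt_stab (x e : M) : x \in Lt -> e ** e = e -> x ** e = x -> eX ** e = eX.
Proof. by rewrite inLt => /andP[_ H]; apply: (leLtE H). Qed.

Lemma Lt_left (m x : M) : x ** eX = x -> m ** x \in Lt -> x \in Lt.
Proof.
move=> xe; rewrite !inLt => /andP[_ H]; apply/andP; split.
  by apply: leLtI => e ee eXe; rewrite -xe -mA eXe.
exact: leLt_trans H (leLt_mull _ _).
Qed.

Lemma Lt_notleft (m x : M) : x ** eX = x -> x \notin Lt -> m ** x \notin Lt.
Proof. by move=> xe; apply: contra; apply: Lt_left. Qed.

Definition inZ (x : M) := (x ** eX == x) && (x \notin Lt).
Definition Zs := [seq g <- enum M | (g ** g == g) && inZ g].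

Lemma inZ_left (m x : M) : inZ x -> inZ (m ** x).
Proof.
case/andP=> /eqP xe xn; rewrite /inZ -mA xe eqxx /=; exact: Lt_notleft.
Qed.

Lemma Zs_P (g : M) : (g \in Zs) = (g ** g == g) && inZ g.
Proof. by rewrite mem_filter mem_enum andbT. Qed.

Lemma Zs_eX (g : M) : g \in Zs -> eX ** g != eX.
Proof.
rewrite Zs_P => /andP[/eqP gg /andP[/eqP ge gn]].
apply/negP=> /eqP eg; move/negP: gn; apply; rewrite inLt; apply/andP; split.
  by apply: leLtI => e ee eXe; rewrite -ge -mA eXe.
by apply: leLtI => e ee g_e; rewrite -eg -mA g_e.
Qed.

Lemma inZ_mul (z g : M) : inZ z -> g \in Zs -> inZ (z ** g).
Proof. by move=> _; rewrite Zs_P => /andP[_]; apply: inZ_left. Qed.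

Lemma eX_leLt (z : M) : z ** eX = z -> leLt z eX.
Proof. by move=> ze; apply: leLtI => e ee eXe; rewrite -ze -mA eXe. Qed.

Lemma momega_end (m x : M) : m ** x = m -> momega m ** x = momega m.
Proof.
move=> mx; have [_ [k kp ->]] := momegaP m; case: k kp => // k _.
by rewrite mpowSr -mA mx.
Qed.

Lemma Z_right_id (z : M) : inZ z -> exists2 g, g \in Zs & z ** g = z.
Proof.
case/andP=> /eqP ze zn.
move: zn; rewrite inLt eX_leLt //= /leLt => /forallPn[e].
rewrite !negb_imply => /andP[/eqP ee /andP[/eqP z_e eXe]].
pose g := momega (e ** eX).
have [gg _] := momegaP (e ** eX).
have zg : z ** g = z by apply: momega_pow; rewrite mA z_e.
have geX : g ** eX = g by apply: momega_end; rewrite -mA eXi.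
exists g => //; rewrite Zs_P gg eqxx /inZ geX eqxx /=.
apply/negP=> gL; have eg := Lt_stab gL gg gg.
have := momega_in (e ** eX); rewrite -/g => /imsetP[a _ ga].
have : eX = eX ** e ** (eX ** a) by rewrite -mA (mA e) -ga eg.
move/(efac eXi); rewrite mA eXi => eXe'.
by move/negP: eXe; apply; apply/eqP.
Qed.

Lemma H1 (m : M) : (two_sided_ideal eX \subset sigma m) = (eX ** m == eX).
Proof.
apply/idP/eqP.
  move/subsetP => /(_ eX); rewrite /two_sided_ideal.
  have -> : eX \in [set a ** eX ** b | a : M, b : M].
    by apply/imset2P; exists (mone M) (mone M); rewrite // m1 mr1.
  move=> /(_ isT) /imset2P[a b _ _ eab].
  pose w := momega m; have [ww _] := momegaP m.
  have e1 : eX ** (a ** w) = eX by apply: (efac (y := b) eXi).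
  have e2 : eX ** w = eX by rewrite -{1}e1 -!mA ww.
  by rewrite -e2 -mA momega_m.
move=> em; have ew : eX ** momega m = eX by apply: momega_pow.
apply/subsetP=> x /imset2P[a b _ _ ->]; apply/imset2P; exists (a ** eX) b => //.
by rewrite -(mA a eX (momega m)) ew.
Qed.

End EX.
End Mon.


Section Lin.
Variables (k : fieldType) (V W : lmodType k) (F : V -> W).
Hypothesis HF : lin_map F.
Lemma lin0 : F 0 = 0.
Proof. have h := HF 1 0 0; rewrite scaler0 addr0 scale1r in h. by apply: (addrI (F 0)); rewrite -h addr0. Qed.
Lemma linD u v : F (u + v) = F u + F v.
Proof. by have := HF 1 u v; rewrite !scale1r. Qed.
Lemma linZ a u : F (a *: u) = a *: F u.
Proof. by have := HF a u 0; rewrite !addr0 lin0 addr0. Qed.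
Lemma linN u : F (- u) = - F u.
Proof. by rewrite -scaleN1r linZ scaleN1r. Qed.
Lemma linB u v : F (u - v) = F u - F v.
Proof. by rewrite linD linN. Qed.
Lemma lin_sum (I : Type) (r : seq I) (P : pred I) (G : I -> V) :
  F (\sum_(i <- r | P i) G i) = \sum_(i <- r | P i) F (G i).
Proof. by apply: big_morph; [apply: linD | apply: lin0]. Qed.
End Lin.

Section FreeMod.
Variables (k : fieldType) (M : finMonoid) (A : {set M}).
Local Notation "x ** y" := (mmul x y) (at level 40, left associativity).
Local Notation T := {n : M | n \in A}.
Local Notation V := {ffun T -> k^o}.
Definition gbasis (n : T) : V := [ffun x => (x == n)%:R].
Definition gimg (m : M) (n : T) : V :=
  if (insub (mmul m (val n)) : option T) is Some n' then gbasis n' else 0.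
Definition gact (m : M) (f : V) : V := \sum_(n : T) f n *: gimg m n.

Lemma gexpand (f : V) : f = \sum_n f n *: gbasis n.
Proof.
apply/ffunP=> x; rewrite sum_ffunE (bigD1 x) //= big1 => [|y yx].
  by rewrite !ffunE eqxx addr0 -[RHS]/(_ * _) mulr1.
by rewrite !ffunE eq_sym (negbTE yx) -[LHS]/(_ * _) mulr0.
Qed.

Lemma lin_expand (W : lmodType k) (F : V -> W) : lin_map F ->
  forall f, F f = \sum_n f n *: F (gbasis n).
Proof.
move=> HF f; rewrite {1}(gexpand f) lin_sum //; apply: eq_bigr => n _.
exact: linZ.
Qed.

Lemma lin_ext (W : lmodType k) (F G : V -> W) : lin_map F -> lin_map G ->
  (forall n, F (gbasis n) = G (gbasis n)) -> forall f, F f = G f.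
Proof.
move=> HF HG H f; rewrite (lin_expand HF) (lin_expand HG).
by apply: eq_bigr => n _; rewrite H.
Qed.

Lemma gact_lin m : lin_map (gact m).
Proof.
move=> a u v; rewrite /gact scaler_sumr -big_split /=; apply: eq_bigr => n _.
by rewrite !ffunE scalerDl scalerA.
Qed.

Lemma gact_basis m n : gact m (gbasis n) = gimg m n.
Proof.
rewrite /gact (bigD1 n) //= big1 => [|y yn].
  by rewrite ffunE eqxx scale1r addr0.
by rewrite ffunE (negbTE yn) scale0r.
Qed.

Lemma gact1 f : gact (mone M) f = f.
Proof.
rewrite [RHS]gexpand; apply: eq_bigr => n _; congr (_ *: _).
rewrite /gimg mmul1 valK //.
Qed.

Lemma gbasisE n x : gbasis n x = (val x == val n)%:R.
Proof. by rewrite ffunE. Qed.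

Lemma gimgE m n x : gimg m n x = (val x == m ** val n)%:R.
Proof.
rewrite /gimg; case: insubP => [y yA yv|nA]; first by rewrite ffunE -yv.
rewrite ffunE; case: eqP => // xe; by move: nA; rewrite -xe (valP x).
Qed.

Lemma gactE m f x : gact m f x = \sum_n f n * (val x == m ** val n)%:R.
Proof. by rewrite /gact sum_ffunE; apply: eq_bigr => n _; rewrite ffunE gimgE. Qed.

Hypothesis closed : forall m n x, x \in A -> n ** x \notin A -> m ** (n ** x) \notin A.

Lemma gactM m n f : gact (m ** n) f = gact m (gact n f).
Proof.
have l1 := gact_lin (m ** n).
have l2 : lin_map (fun f => gact m (gact n f)).
  by move=> a u v; rewrite gact_lin gact_lin.
apply: (lin_ext l1 l2) => x; rewrite !gact_basis {2}/gimg.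
case: insubP => [y yA yv|nA].
  by rewrite gact_basis /gimg yv mmulA.
rewrite (lin0 (gact_lin m)) /gimg; case: insubP => // y yA yv.
by rewrite -mmulA (negbTE (closed m (valP x) nA)) in yA.
Qed.

Lemma gmod : is_kM_module gact.
Proof. by split; [apply: gact_lin | apply: gact1 | apply: gactM]. Qed.

End FreeMod.


Section Uniq.
Variables (k : fieldType) (M : finMonoid).
Variables (S P Q : lmodType k) (actS : M -> S -> S) (actP : M -> P -> P)
  (actQ : M -> Q -> Q) (pi : P -> S) (rho : Q -> S).
Hypothesis HS : is_kM_module actS.
Hypothesis cP : is_projective_cover actS actP pi.
Hypothesis cQ : is_projective_cover actS actQ rho.

Lemma image_sub (V W : lmodType k) (actV : M -> V -> V) (actW : M -> W -> W) (f : V -> W) :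
  is_kM_hom actV actW f -> is_submodule actW (fun w => exists v, f v = w).
Proof.
case=> lf hf; split.
- by exists 0; rewrite (lin0 lf).
- by move=> _ _ [u <-] [v <-]; exists (u + v); rewrite (linD lf).
- by move=> a _ [v <-]; exists (a *: v); rewrite (linZ lf).
- by move=> m _ [v <-]; exists (actV m v); rewrite hf.
Qed.

Lemma hom_lin (V W : lmodType k) (actV : M -> V -> V) (actW : M -> W -> W) (f : V -> W) :
  is_kM_hom actV actW f -> lin_map f.
Proof. by case. Qed.

Lemma cover_unique : kM_isomorphic actP actQ.
Proof.
case: cP => [[mP projP] hpi spi supP].
case: cQ => [[mQ projQ] hrho srho supQ].
have [f [hf rf]] := projP Q S actQ actS rho mQ HS hrho srho pi hpi.
have lf := hom_lin hf; have lpi := hom_lin hpi; have lrho := hom_lin hrho.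
have fsurj : forall q, exists p, f p = q.
  apply: supQ; first exact: image_sub hf.
  move=> q; have [p pq] := spi (rho q).
  exists (f p), (q - f p); split; [by exists p | | by rewrite addrC subrK].
  by rewrite (linB lrho) rf pq subrr.
have hid : is_kM_hom actQ actQ id by split.
have [g [hg fg]] := projQ P Q actP actQ f mP mQ hf fsurj id hid.
have lg := hom_lin hg.
have gsurj : forall p, exists q, g q = p.
  apply: supP; first exact: image_sub hg.
  move=> p; exists (g (f p)), (p - g (f p)); split; [by exists (f p) | | by rewrite addrC subrK].
  by rewrite (linB lpi) -(rf (g (f p))) fg rf subrr.
exists f; split => //; exists g => // p.
by have [q <-] := gsurj p; rewrite fg.
Qed.
End Uniq.


Section Main.
Variables (k : fieldType) (M : finMonoid) (eX : M).
Local Notation "x ** y" := (mmul x y) (at level 40, left associativity).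
Hypothesis RT : R_trivial M.
Hypothesis eXi : eX ** eX = eX.
Local Notation Lt := (Lt_of eX).
Local Notation ML := (ML_of eX).

Lemma Lt_actE : @Lt_act k M eX = @gact k M (Lt_of eX). Proof. by []. Qed.
Lemma ML_actE : @ML_act k M eX = @gact k M (ML_of eX). Proof. by []. Qed.

Lemma ML_P x : x \in ML -> exists a l, l \in L_of eX /\ x = a ** l.
Proof. by case/imset2P=> a l _ lL ->; exists a, l. Qed.

Lemma ML_eX x : x \in ML -> x ** eX = x.
Proof.
case/ML_P=> a [l [lL ->]]; move: lL; rewrite inE => /eqP eq.
have : l \in left_ideal_of l by apply/imsetP; exists (mone M); rewrite ?mmul1.
rewrite eq => /imsetP[b _ ->]; by rewrite -!mA eXi.
Qed.

Lemma ML_left m x : x \in ML -> m ** x \in ML.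
Proof.
case/ML_P=> a [l [lL ->]]; apply/imset2P; exists (m ** a) l => //.
by rewrite mA.
Qed.

Lemma Lt_ML x : x \in Lt -> x \in ML.
Proof.
move=> xL; apply/imset2P; exists x eX => //; last by rewrite (Lt_eX eXi xL).
by rewrite inE.
Qed.

Lemma ML_closed m n x : x \in ML -> n ** x \notin ML -> m ** (n ** x) \notin ML.
Proof. by move=> xM; rewrite ML_left. Qed.

Lemma Lt_closed m n x : x \in Lt -> n ** x \notin Lt -> m ** (n ** x) \notin Lt.
Proof.
move=> xL nx; apply: Lt_notleft => //; by rewrite -mA (Lt_eX eXi xL).
Qed.

Definition emb (x : LtT eX) : MLT eX := exist _ (val x) (Lt_ML (valP x)).
Definition phi (f : kML k eX) : kLt k eX := [ffun x => f (emb x)].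
Definition Lt0 : LtT eX := exist _ eX (eX_Lt eX).
Definition proj (n : MLT eX) : LtT eX := odflt Lt0 (insub (val n)).

Lemma phi_hom : is_kM_hom (@ML_act k M eX) (@Lt_act k M eX) phi.
Proof.
split.
  by move=> a u v; apply/ffunP=> x; rewrite !ffunE.
move=> m f; apply/ffunP=> x; rewrite ffunE ML_actE Lt_actE !gactE.
rewrite (bigID (fun n : MLT eX => val n \in Lt)) /= [X in _ + X]big1 ?addr0.
  rewrite (reindex emb) /=.
    by apply: eq_big => [y|y _]; rewrite ?ffunE ?(valP y).
  exists proj => n; rewrite inE => nL; last first.
    by apply: val_inj; rewrite /proj /= insubT.
  by apply: val_inj; rewrite /proj /= valK.
move=> n nL; case: eqP; rewrite ?mulr0 // => xe.
by move: nL; rewrite (@Lt_left _ _ m _ (ML_eX (valP n))) // -xe (valP x).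
Qed.


Lemma phi_surj (g : kLt k eX) : exists f, phi f = g.
Proof.
exists ([ffun n : MLT eX => (if (insub (val n) : option (LtT eX)) is Some y then g y else 0 : k^o)] : kML k eX).
by apply/ffunP=> x; rewrite !ffunE /= valK.
Qed.

Lemma phi_ker (f : kML k eX) : phi f = 0 <-> in_kLlt f.
Proof.
split.
  move=> H n; rewrite /Llt_of in_setD (valP n) andbT negbK => nL.
  have := congr1 (fun g : kLt k eX => g (exist _ (val n) nL)) H.
  rewrite !ffunE; have -> : emb (exist _ (val n) nL) = n by apply: val_inj.
  by [].
move=> H; apply/ffunP=> x; rewrite !ffunE; apply: H.
by rewrite /Llt_of in_setD (valP x).
Qed.

Definition piX (f : kLt k eX) : k^o := \sum_n f n * (eX ** val n == eX)%:R.

Lemma piX_lin : lin_map piX.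
Proof.
move=> a u v; rewrite /piX scaler_sumr -big_split /=; apply: eq_bigr => n _.
by rewrite !ffunE mulrDl -scalerAl.
Qed.

Lemma piX_basis n : piX (@gbasis k _ _ n) = (eX ** val n == eX)%:R.
Proof.
rewrite /piX (bigD1 n) //= big1 => [|y yn]; first by rewrite ffunE eqxx mul1r addr0.
by rewrite ffunE (negbTE yn) mul0r.
Qed.

Lemma H2 m n : n \in Lt ->
  ((m ** n \in Lt) && (eX ** (m ** n) == eX)) = (eX ** m == eX) && (eX ** n == eX).
Proof.
move=> nL; apply/andP/andP => [[_ /eqP e]|[/eqP em /eqP en]].
  have e1 : eX ** (eX ** m) = eX by apply: (efac RT eXi (y := n)); rewrite -mA.
  rewrite mA eXi in e1; split; apply/eqP => //.
  by rewrite -{2}e mA e1.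
split; last by rewrite mA em en.
rewrite inLt; apply/andP; split.
  by apply: eX_leLt; rewrite -mA (Lt_eX eXi nL).
have h : eX = eX ** (m ** n) by rewrite mA em en.
by apply: leLtI => e ee mne; rewrite h -mA mne.
Qed.


Local Notation X := (two_sided_ideal eX).
Local Notation SA := (@S_act k M X).

Lemma S_actE m (c : k^o) : SA m c = if eX ** m == eX then c else 0.
Proof. by rewrite /S_act H1. Qed.

Lemma S_lin m : lin_map (SA m).
Proof. by move=> a u v; rewrite !S_actE; case: ifP; rewrite ?scaler0 ?addr0. Qed.

Lemma S_mod : is_kM_module (SA).
Proof.
split; first exact: S_lin.
  by move=> v; rewrite S_actE mmulm1 eqxx.
move=> m n v; rewrite !S_actE.
case: (eqVneq (eX ** m) eX) => em.
  by rewrite mA em.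
case: eqP => // e; case/eqP: em.
have e1 : eX ** (eX ** m) = eX by apply: (efac RT eXi (y := n)); rewrite -mA.
by rewrite mA eXi in e1.
Qed.

Lemma piX_hom : is_kM_hom (@Lt_act k M eX) (SA) piX.
Proof.
split; first exact: piX_lin.
move=> m; rewrite Lt_actE.
have l1 : lin_map (fun f => piX (@gact k M Lt m f)).
  by move=> a u v; rewrite (gact_lin m) piX_lin.
have l2 : lin_map (fun f => SA m (piX f)).
  by move=> a u v; rewrite piX_lin S_lin.
apply: (lin_ext l1 l2) => n /=; rewrite gact_basis piX_basis S_actE /gimg.
case: insubP => [y yL yv|nL].
  by rewrite piX_basis yv; have := H2 m (valP n); rewrite yL /= => ->; case: ifP.
rewrite (lin0 piX_lin); have := H2 m (valP n); rewrite (negbTE nL) /=.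
by case: (eX ** m == eX) => //= /esym ->.
Qed.

Lemma piX_surj (c : k^o) : exists f, piX f = c.
Proof.
exists (c *: @gbasis k _ _ Lt0).
rewrite (linZ piX_lin) piX_basis /= eXi eqxx.
by rewrite -[_ *: _]/(_ * _) mulr1.
Qed.


Section Eop.
Variables (V : lmodType k) (act : M -> V -> V).
Definition Qstep (b : V) (g : M) := b - act g b.
Definition Qop (b : V) := foldl Qstep b (Zs eX).
Definition Eop (a : V) := act eX (iter #|M| Qop a).

Hypothesis Hmod : is_kM_module act.
Let lin_act m : lin_map (act m). Proof. by case: Hmod. Qed.
Let actM m n v : act (m ** n) v = act m (act n v). Proof. by case: Hmod. Qed.

Definition Vj j (b : V) := forall z, inZ eX z -> (#|right_ideal_of z| <= j)%N -> act z b = 0.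

Lemma Vj_step j b g : Vj j b -> g \in Zs eX -> Vj j (Qstep b g).
Proof.
move=> Hb gZ z zZ zj; rewrite /Qstep (linB (lin_act z)) -actM (Hb z) // (Hb (z ** g)) ?subrr //.
  exact: inZ_mul.
by apply: leq_trans zj; apply: rid_le.
Qed.

Lemma Vj_top j z (s : seq M) b : Vj j b -> {subset s <= Zs eX} -> inZ eX z ->
  (#|right_ideal_of z| <= j.+1)%N ->
  (act z b = 0 \/ exists2 g, g \in s & z ** g = z) -> act z (foldl Qstep b s) = 0.
Proof.
elim: s b => [|g s IH] b Hb sZ zZ zj H /=.
  by case: H => // -[].
have gZ : g \in Zs eX by apply: sZ; rewrite inE eqxx.
apply: IH; first exact: Vj_step.
- by move=> x xs; apply: sZ; rewrite inE xs orbT.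
- done.
- done.
case: (eqVneq (z ** g) z) => zg.
  by left; rewrite /Qstep (linB (lin_act z)) -actM zg subrr.
have e0 : act z (act g b) = 0.
  rewrite -actM; apply: Hb; first exact: inZ_mul.
  by rewrite -ltnS; apply: leq_trans (rid_lt RT zg) zj.
case: H => [zb|[g' g's zg']].
  by left; rewrite /Qstep (linB (lin_act z)) e0 zb subr0.
move: g's; rewrite inE => /orP[/eqP gg|g's]; first by rewrite -gg zg' eqxx in zg.
by right; exists g'.
Qed.

Lemma Q_up j b : Vj j b -> Vj j.+1 (Qop b).
Proof.
move=> Hb z zZ zj; apply: (Vj_top Hb) => //.
have [g gZ zg] := Z_right_id RT eXi zZ.
by right; exists g.
Qed.

Lemma Vj_iter n a : Vj n (iter n Qop a).
Proof.
elim: n => [|n IH] /=; last exact: Q_up.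
by move=> z _; rewrite leqNgt rid_gt0.
Qed.

Lemma E_kill z a : inZ eX z -> act z (Eop a) = 0.
Proof.
move=> zZ; rewrite /Eop -actM; case/andP: (zZ) => /eqP -> _.
by apply: Vj_iter => //; apply: max_card.
Qed.

End Eop.

Lemma E_hom (V W : lmodType k) (actV : M -> V -> V) (actW : M -> W -> W) (f : V -> W) :
  is_kM_hom actV actW f -> forall a, f (Eop actV a) = Eop actW (f a).
Proof.
case=> lf hf a; rewrite /Eop hf; congr (actW eX _).
elim: #|M| => [|n IH] //=; rewrite -IH /Qop.
elim: (Zs eX) (iter n _ a) => [|g s IHs] b //=.
by rewrite IHs /Qstep (linB lf) hf.
Qed.

Local Notation d0 := (@gbasis k _ _ Lt0).

Lemma E_P : Eop (@Lt_act k M eX) d0 = d0.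
Proof.
have Q1 g : g \in Zs eX -> Qstep (@Lt_act k M eX) d0 g = d0.
  rewrite Zs_P => /andP[_ /andP[/eqP ge gn]].
  rewrite /Qstep Lt_actE gact_basis /gimg insubF ?subr0 //.
  by rewrite /= ge (negbTE gn).
have Q0 : Qop (@Lt_act k M eX) d0 = d0.
  rewrite /Qop; suff H s : {subset s <= Zs eX} -> foldl (Qstep (@Lt_act k M eX)) d0 s = d0.
    by apply: H.
  elim: s => [|g s IH] //= sZ.
  rewrite Q1; last by apply: sZ; rewrite inE eqxx.
  by apply: IH => x xs; apply: sZ; rewrite inE xs orbT.
rewrite /Eop; have -> : iter #|M| (Qop (@Lt_act k M eX)) d0 = d0.
  by elim: #|M| => //= n ->.
rewrite Lt_actE gact_basis /gimg insubT /= ?eXi ?(eX_Lt eX) //.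
Qed.


Lemma Lt_mod : is_kM_module (@Lt_act k M eX).
Proof. rewrite Lt_actE; apply: gmod; exact: Lt_closed. Qed.

Lemma ML_mod : is_kM_module (@ML_act k M eX).
Proof. rewrite ML_actE; apply: gmod; exact: ML_closed. Qed.

Lemma gimg_Lt0 (y : LtT eX) : @gimg k _ _ (val y) Lt0 = @gbasis k _ _ y.
Proof.
rewrite /gimg /= (Lt_eX eXi (valP y)) valK //.
Qed.

Lemma Lt_proj : is_projective (@Lt_act k M eX).
Proof.
split; first exact: Lt_mod.
move=> A B actA actB g HmA HmB hg gs h hh.
have [a ga] := gs (h d0).
pose b := Eop actA a.
pose h' (f : kLt k eX) : A := \sum_n f n *: actA (val n) b.
have lh' : lin_map h'.
  move=> c u v; rewrite /h' scaler_sumr -big_split /=; apply: eq_bigr => n _.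
  by rewrite !ffunE scalerDl scalerA.
have h'b y : h' (@gbasis k _ _ y) = actA (val y) b.
  rewrite /h' (bigD1 y) //= big1 => [|x xy]; first by rewrite ffunE eqxx scale1r addr0.
  by rewrite ffunE (negbTE xy) scale0r.
have [lA _ AM] := HmA; have [lB _ BM] := HmB.
have [lg hgf] := hg; have [lh hhf] := hh.
exists h'; split.
  split => // m; rewrite Lt_actE.
  have l1 : lin_map (fun f => h' (@gact k M Lt m f)).
    by move=> c u v; rewrite (gact_lin m) lh'.
  have l2 : lin_map (fun f => actA m (h' f)).
    by move=> c u v; rewrite lh' lA.
  apply: (lin_ext l1 l2) => y /=; rewrite gact_basis h'b -AM /gimg.
  case: insubP => [z zL zv|nL]; first by rewrite h'b zv.
  rewrite (lin0 lh') E_kill //.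
  by rewrite /inZ -mA (Lt_eX eXi (valP y)) eqxx nL.
have l1 : lin_map (fun f => g (h' f)) by move=> c u v; rewrite lh' lg.
apply: (lin_ext l1 lh) => y /=.
rewrite h'b hgf (E_hom hg) ga -(E_hom hh) E_P -hhf Lt_actE gact_basis gimg_Lt0 //.
Qed.


Lemma yx_ne (y x : M) : y \in Lt -> eX ** x = x -> x != eX -> y ** x != y.
Proof.
move=> yL ex xne; apply/eqP=> yx.
have [ww _] := momegaP RT x.
have yw : y ** momega x = y by apply: momega_pow.
have ew := Lt_stab yL ww yw.
have := momega_in RT x => /imsetP[c _ wc].
have exc : eX = x ** c by rewrite -{1}ew wc mA ex.
move/eqP: xne; apply; apply: RT; apply/eqP; rewrite eqEsubset; apply/andP; split.
  by rewrite -ex rid_mul.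
apply/subsetP=> z /imsetP[d _ ->]; rewrite exc -mA; exact: in_rid.
Qed.

Lemma Nsum (N : kLt k eX -> Prop) : N 0 -> (forall u v, N u -> N v -> N (u + v)) ->
  forall (I : Type) (r : seq I) (P : pred I) (F : I -> kLt k eX),
  (forall i, P i -> N (F i)) -> N (\sum_(i <- r | P i) F i).
Proof. by move=> N0 ND I r P F H; apply: big_ind. Qed.

Lemma Lt_sup (N : kLt k eX -> Prop) : is_submodule (@Lt_act k M eX) N ->
  (forall v, exists a b, [/\ N a, piX b = 0 & v = a + b]) -> forall v, N v.
Proof.
case=> N0 ND NZ NA Hsplit.
have NB u v : N u -> N v -> N (u - v).
  by move=> Nu Nv; apply: ND => //; rewrite -scaleN1r; apply: NZ.
have [a [b [Na pb ab]]] := Hsplit d0.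
have pa : piX a = 1.
  have := congr1 piX ab; rewrite (linD piX_lin) pb addr0 piX_basis /= eXi eqxx.
  by move<-.
pose u := Lt_act eX a.
have Nu : N u by apply: NA.
have uE y : u y = \sum_n a n * (val y == eX ** val n)%:R by rewrite /u Lt_actE gactE.
have u0 : u Lt0 = 1.
  by rewrite uE -[RHS]pa /piX; apply: eq_bigr => n _; rewrite /= eq_sym.
have uy y : u y != 0 -> eX ** val y = val y.
  rewrite uE => /eqP nz; case: (boolP [exists n : LtT eX, val y == eX ** val n]).
    by case/existsP=> n /eqP ->; rewrite mA eXi.
  rewrite negb_exists => /forallP H; case: nz; apply: big1 => n _.
  by rewrite (negbTE (H n)) mulr0.
have claim j : forall y : LtT eX, eX ** val y = val y -> val y != eX ->
    (#|right_ideal_of (val y)| <= j)%N -> N (@gbasis k _ _ y).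
  elim: j => [|j IH] y ey yne yj.
    by move: yj; rewrite leqNgt rid_gt0.
  have Nyu : N (Lt_act (val y) u) by apply: NA.
  have E1 : Lt_act (val y) u = @gbasis k _ _ y +
     \sum_(x | x != Lt0) u x *: @gimg k _ _ (val y) x.
    rewrite Lt_actE /gact (bigD1 Lt0) //= u0 scale1r gimg_Lt0 //.
  have NR : N (\sum_(x | x != Lt0) u x *: @gimg k _ _ (val y) x).
    apply: Nsum => // x xne; case: (eqVneq (u x) 0) => [->|ux].
      by rewrite scale0r.
    apply: NZ; have ex := uy x ux.
    have xe : val x != eX by apply: contra xne => /eqP xe; apply/eqP/val_inj.
    rewrite /gimg; case: insubP => [z zL zv|_] //.
    have yxn := yx_ne (valP y) ex xe.
    have lt := rid_lt RT yxn.
    apply: IH.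
    - by rewrite zv mA ey.
    - apply/eqP => ze; move: lt; rewrite -zv ze -ey.
      by rewrite ltnNge rid_le.
    - by rewrite zv -ltnS; apply: leq_trans lt yj.
  have -> : @gbasis k _ _ y = Lt_act (val y) u -
      \sum_(x | x != Lt0) u x *: @gimg k _ _ (val y) x by rewrite E1 addrK.
  exact: NB.
have Nd0 : N d0.
  have -> : d0 = u - \sum_(x | x != Lt0) u x *: @gbasis k _ _ x.
    by rewrite {1}(gexpand u) (bigD1 Lt0) //= u0 scale1r addrK.
  apply: NB => //; apply: Nsum => // x xne; case: (eqVneq (u x) 0) => [->|ux].
    by rewrite scale0r.
  apply: NZ; apply: (claim #|M|); first exact: uy.
    by apply: contra xne => /eqP xe; apply/eqP/val_inj.
  exact: max_card.
move=> v; rewrite (gexpand v); apply: Nsum => // n _; apply: NZ.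
by rewrite -gimg_Lt0 -gact_basis -Lt_actE; apply: NA.
Qed.


End Main.

Unset Implicit Arguments.

Theorem mainTheorem10 (M : finMonoid) (k : fieldType) (X : {set M}) (eX : M) :
  R_trivial M ->
  idempotent_el eX -> two_sided_ideal eX = X ->
  (* k L~_X is a projective cover of S_X *)
  [/\ is_kM_module (@Lt_act k M eX),
      (exists pi : kLt k eX -> k^o,
         is_projective_cover (@S_act k M X) (@Lt_act k M eX) pi),
  (* every projective cover P_X of S_X is isomorphic to k L~_X *)
      (forall (P : lmodType k) (actP : M -> P -> P) (pi : P -> k^o),
         is_projective_cover (@S_act k M X) actP pi ->
         kM_isomorphic actP (@Lt_act k M eX)) &
  (* k L~_X is isomorphic to kML_X / k L~(X)_< *)
      is_kM_module (@ML_act k M eX) /\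
      exists phi : kML k eX -> kLt k eX,
        [/\ is_kM_hom (@ML_act k M eX) (@Lt_act k M eX) phi,
            (forall g, exists f, phi f = g) &
            forall f, phi f = 0 <-> in_kLlt f]].
Proof.
move=> RT /eqP eXi <-.
have cover : is_projective_cover (@S_act k M (two_sided_ideal eX)) (@Lt_act k M eX)
    (@piX k M eX).
  split.
  - exact: Lt_proj.
  - exact: piX_hom.
  - exact: piX_surj.
  - exact: Lt_sup.
split.
- exact: Lt_mod.
- by exists (@piX k M eX).
- move=> P actP pi cP; apply: (cover_unique _ cP cover).
  exact: S_mod.
- split; first exact: ML_mod.
  exists (@phi k M eX eXi); split.
  + exact: phi_hom.
  + exact: phi_surj.
  + exact: phi_ker.
Qed.
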